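(* Let $\psi_n,\psi^*_n$ ($n\in\mathbb{Z}$) satisfy the canonical anticommutation relations $[\psi^*_m,\psi^*_n]_+=[\psi_m,\psi_n]_+=0$, $[\psi^*_m,\psi_n]_+=\delta_{mn}$. Let $\gamma_n\ge0$ ($n\in\mathbb{Z}$) with only finitely many nonzero and $S_n=\sinh\gamma_n<1$, $C_n=\cosh\gamma_n$. Define $H_{mn}=\psi_n\psi^*_m+(-1)^{m-n+1}\psi_m\psi^*_n$ for $m>n$, $$\mathcal H=\sum_{m>n}(-1)^{m-n}C_mS_{m-1}\cdots S_{n+1}C_nH_{mn},$$ $$\phi(\theta)=\sum_nC_ne^{in\theta}\prod_{j\le n-1}(1+S_je^{-i\theta})\prod_{j\ge n+1}(1-S_je^{i\theta})\,\psi_n,\qquad \phi^*(\theta)=\sum_nC_ne^{-in\theta}\prod_{j\le n-1}(1-S_je^{i\theta})\prod_{j\ge n+1}(1+S_je^{-i\theta})\,\psi^*_n .$$ Then $$[\mathcal H,\phi(\theta)]=-(e^{i\theta}+e^{-i\theta})\phi(\theta),\qquad[\mathcal H,\phi^*(\theta)]=(e^{i\theta}+e^{-i\theta})\phi^*(\theta),$$ $$[\phi^*(\theta_1),\phi(\theta_2)]_+=\prod_j(1+S_je^{-i\theta_1})(1-S_je^{i\theta_1})\sum_{k\in\mathbb Z}e^{ik(\theta_1-\theta_2)}.$$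
   Context: The infinite sums are formal linear combinations of the $\psi_n,\psi^*_n$ (respectively of bilinears), and commutators and anticommutators are computed termwise using the anticommutation relations; the last identity is an identity of formal Fourier series in $\theta_1,\theta_2$. Products over $j$ are finite since $S_j=0$ for all but finitely many $j$. *)

(* Defs.v *)
From HB Require Import structures.
From mathcomp Require Import all_boot all_order all_algebra.
From mathcomp Require Import all_classical all_reals all_analysis.
From mathcomp Require Import complex.

Set Implicit Arguments.
Unset Strict Implicit.
Unset Printing Implicit Defensive.

Import Order.TTheory GRing.Theory Num.Theory.
Local Open Scope classical_set_scope.
Local Open Scope ring_scope.
Local Open Scope complex_scope.

(* Justification of the termwise structure constants used below:           *)
(* in ANY ring containing elements psi n, psis n (n : int) satisfying the   *)
(* canonical anticommutation relations, the commutators of a bilinear       *)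
(* psi_a psi*_b with a generator are again generators.                      *)

Definition CAR (A : pzRingType) (psi psis : int -> A) : Prop :=
  forall m n : int,
    [/\ psis m * psis n + psis n * psis m = 0,
        psi m * psi n + psi n * psi m = 0 &
        psis m * psi n + psi n * psis m = (m == n)%:R].

Lemma CAR_comm_psi (A : pzRingType) (psi psis : int -> A) :
  CAR psi psis -> forall a b k : int,
  psi a * psis b * psi k - psi k * (psi a * psis b) = (b == k)%:R * psi a.
Proof.
move=> H a b k.
have [_ Hpp Hsp] := H b k.
have [_ Hpp' _] := H k a.
have E1 : psis b * psi k = (b == k)%:R - psi k * psis b.
  by rewrite -Hsp addrK.
have E2 : psi k * psi a = - (psi a * psi k).
  by apply/eqP; rewrite -subr_eq0 opprK Hpp'.
rewrite -mulrA E1 mulrBr mulr_natr mulr_natl [psi k * (_ * _)]mulrA E2 mulNr mulrA.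
by rewrite opprK subrK.
Qed.

Lemma CAR_comm_psis (A : pzRingType) (psi psis : int -> A) :
  CAR psi psis -> forall a b k : int,
  psi a * psis b * psis k - psis k * (psi a * psis b) = - ((a == k)%:R * psis b).
Proof.
move=> H a b k.
have [Hss _ _] := H b k.
have [_ _ Hsp] := H k a.
have E1 : psis k * psi a = (k == a)%:R - psi a * psis k.
  by rewrite -Hsp addrK.
have E2 : psis b * psis k = - (psis k * psis b).
  by apply/eqP; rewrite -subr_eq0 opprK Hss.
rewrite [psis k * _]mulrA E1 mulrBl eq_sym -mulrA E2 mulrN mulrA.
by rewrite opprB addrA addNr add0r.
Qed.

(* Formal (possibly infinite) linear combinations of the generators and of  *)
(* the bilinears psi_a psi*_b, with termwise (anti)commutators computed     *)
(* with the structure constants above.  All sums are finitely supported     *)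
(* sums (fsbigop); in every use below only finitely many terms are nonzero. *)

(* sum_n cpsi n psi_n + sum_n cpsis n psi*_n *)
Record flin (K : Type) := FLin { cpsi : int -> K ; cpsis : int -> K }.

(* sum_{a,b} X a b psi_a psi*_b *)
Definition fbil (K : Type) := int -> int -> K.

Definition fscale (K : pzRingType) (c : K) (v : flin K) : flin K :=
  FLin (fun n => c * cpsi v n) (fun n => c * cpsis v n).

(* [X, v] termwise, using [psi_a psi*_b, psi_k] = delta_{bk} psi_a and
   [psi_a psi*_b, psi*_k] = - delta_{ak} psi*_b *)
Definition fcomm (K : pzRingType) (X : fbil K) (v : flin K) : flin K :=
  FLin (fun a => \sum_(b \in [set: int]) X a b * cpsi v b)
       (fun b => - \sum_(a \in [set: int]) X a b * cpsis v a).

(* [u, v]_+ termwise, using the CAR; a scalar *)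
Definition facomm (K : pzRingType) (u v : flin K) : K :=
  \sum_(n \in [set: int]) (cpsis u n * cpsi v n + cpsi u n * cpsis v n).

Definition sinhR (R : realType) (x : R) : R := (expR x - expR (- x)) / 2.
Definition coshR (R : realType) (x : R) : R := (expR x + expR (- x)) / 2.

Definition expi (R : realType) (x : R) : R[i] := Complex (cos x) (sin x).

Section Objects.
Variables (R : realType) (gamma : int -> R).

Definition Sg (n : int) : R[i] := (sinhR (gamma n))%:C.
Definition Cg (n : int) : R[i] := (coshR (gamma n))%:C.

Definition Hmn (m n : int) : fbil R[i] := fun a b =>
  ((a == n) && (b == m))%:R + (-1) ^ (m - n + 1) * ((a == m) && (b == n))%:R.

Definition hcoef (m n : int) : R[i] :=
  (-1) ^ (m - n) * Cg m *
  (\big[*%R/1]_(j \in [set j : int | (n < j)%R && (j < m)%R]) Sg j) * Cg n.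

Definition calH : fbil R[i] := fun a b =>
  \sum_(mn \in [set mn : int * int | (mn.2 < mn.1)%R])
     hcoef mn.1 mn.2 * Hmn mn.1 mn.2 a b.

Definition phi_coef (theta : R) (n : int) : R[i] :=
  Cg n * expi (n%:~R * theta) *
  (\big[*%R/1]_(j \in [set j : int | (j <= n - 1)%R]) (1 + Sg j * expi (- theta))) *
  (\big[*%R/1]_(j \in [set j : int | (n + 1 <= j)%R]) (1 - Sg j * expi theta)).

Definition phis_coef (theta : R) (n : int) : R[i] :=
  Cg n * expi (- (n%:~R * theta)) *
  (\big[*%R/1]_(j \in [set j : int | (j <= n - 1)%R]) (1 - Sg j * expi theta)) *
  (\big[*%R/1]_(j \in [set j : int | (n + 1 <= j)%R]) (1 + Sg j * expi (- theta))).

Definition phi (theta : R) : flin R[i] := FLin (phi_coef theta) (fun _ => 0).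
Definition phis (theta : R) : flin R[i] := FLin (fun _ => 0) (phis_coef theta).

Definition Pprod (theta : R) : R[i] :=
  \big[*%R/1]_(j \in [set: int])
     ((1 + Sg j * expi (- theta)) * (1 - Sg j * expi theta)).

End Objects.

Definition trig_coeffs (R : realType) (c : int -> R[i]) (f : R -> R[i]) : Prop :=
  finite_set [set k : int | c k != 0] /\
  forall x : R, f x = \sum_(k \in [set: int]) c k * expi (k%:~R * x).

(* The formal two-variable series sum_{k in Z} e^{i k (theta1 - theta2)}:
   coefficient of e^{i (p theta1 + q theta2)}. *)
Definition delta_series (R : realType) (p q : int) : R[i] :=
  if p + q == 0 then 1 else 0.

(* coefficient of e^{i (p theta1 + q theta2)} in P(theta1) * D(theta1, theta2),
   for P a trigonometric polynomial with coefficients cP and D a formal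
   two-variable series with coefficients d *)
Definition tp_mul_series (R : realType) (cP : int -> R[i]) (d : int -> int -> R[i])
  (p q : int) : R[i] :=
  \sum_(r \in [set: int]) cP r * d (p - r) q.

(* Main.v *)
Require Import Defs.
From HB Require Import structures.
From mathcomp Require Import all_boot all_order all_algebra.
From mathcomp Require Import all_classical all_reals all_analysis.
From mathcomp Require Import complex.
From mathcomp Require Import zify ring lra.
Import Order.TTheory GRing.Theory Num.Theory.
Local Open Scope classical_set_scope.
Local Open Scope ring_scope.
Set Implicit Arguments.
Unset Strict Implicit.
Unset Printing Implicit Defensive.
Section FS.
Variables (K : Type) (idx : K) (op : Monoid.com_law idx) (I : choiceType).

Lemma fsbig_D1 (A : set I) (F : I -> K) x :
  finite_set (F @^-1` [set~ idx]) -> A x ->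
  \big[op/idx]_(j \in A) F j = op (F x) (\big[op/idx]_(j \in A `\ x) F j).
Proof.
move=> fin Ax.
pose D := (A `&` F @^-1` [set~ idx]) `|` [set x].
have finD : finite_set D.
  rewrite /D finite_setU; split; last exact: finite_set1.
  exact: (sub_finite_set _ fin) => y [].
rewrite -(fsbig_widen D A F); last 2 first.
- by move=> y [[]|->].
- move=> y [Ay /not_orP [/not_andP [//|/=]]] => /contrapT.
  by [].
rewrite (fsbigD1 x D F) //; last by right.
congr (op _ _); apply: fsbig_widen.
- by move=> y [[[]|->] /= yx].
- move=> y [[Ay yx] /not_andP [/not_orP [/not_andP [//|/= /contrapT //] _]|//]].
Qed.

Lemma fsbig_split2 (A : set I) (F G : I -> K) :
  finite_set (F @^-1` [set~ idx]) -> finite_set (G @^-1` [set~ idx]) ->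
  \big[op/idx]_(j \in A) op (F j) (G j) =
  op (\big[op/idx]_(j \in A) F j) (\big[op/idx]_(j \in A) G j).
Proof.
move=> fF fG.
pose D := A `&` (F @^-1` [set~ idx] `|` G @^-1` [set~ idx]).
have finD : finite_set D.
  have fU : finite_set (F @^-1` [set~ idx] `|` G @^-1` [set~ idx]).
    by rewrite finite_setU.
  by apply: sub_finite_set fU => y [].
have sub : D `<=` A by move=> y [].
have zer H : (forall y, ~ (F @^-1` [set~ idx] `|` G @^-1` [set~ idx]) y -> H y = idx) ->
    \big[op/idx]_(j \in A) H j = \big[op/idx]_(j \in D) H j.
  move=> HH; apply/esym/fsbig_widen => // y [Ay /not_andP [//|/HH]] //.
rewrite (zer (fun j => op (F j) (G j))); last first.
  by move=> y /not_orP [/contrapT -> /contrapT ->]; rewrite Monoid.simpm.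
rewrite (zer F); last by move=> y /not_orP [/contrapT -> _].
rewrite (zer G); last by move=> y /not_orP [_ /contrapT ->].
by rewrite !fsbig_finite // big_split.
Qed.

End FS.

Lemma fsum_D1 (R : nmodType) (I : choiceType) (A : set I) (F : I -> R) x :
  finite_set (F @^-1` [set~ 0]) -> A x ->
  \sum_(j \in A) F j = F x + \sum_(j \in A `\ x) F j.
Proof. exact: fsbig_D1. Qed.

Lemma fsumD (R : nmodType) (I : choiceType) (A : set I) (F G : I -> R) :
  finite_set (F @^-1` [set~ 0]) -> finite_set (G @^-1` [set~ 0]) ->
  \sum_(j \in A) (F j + G j) = \sum_(j \in A) F j + \sum_(j \in A) G j.
Proof. exact: fsbig_split2. Qed.

Lemma fprodM (R : comPzSemiRingType) (I : choiceType) (A : set I) (F G : I -> R) :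
  finite_set (F @^-1` [set~ 1]) -> finite_set (G @^-1` [set~ 1]) ->
  \big[*%R/1]_(j \in A) (F j * G j) =
  \big[*%R/1]_(j \in A) F j * \big[*%R/1]_(j \in A) G j.
Proof. exact: fsbig_split2. Qed.
Lemma finite_int_bnd (P : set int) (lo hi : int) :
  (forall i, P i -> lo <= i <= hi) -> finite_set P.
Proof.
move=> H.
have fI : finite_set ((fun k : nat => lo + k%:Z) @` `I_(absz (hi - lo)).+1).
  exact/finite_image/finite_II.
apply: sub_finite_set fI => i /H /andP [h1 h2].
exists (absz (i - lo)).
  rewrite /=; lia.
by lia.
Qed.

Lemma fsum_shift (K : Type) (idx : K) (op : Monoid.com_law idx) (F : int -> K) (c : int) :
  \big[op/idx]_(n \in [set: int]) F (n + c) = \big[op/idx]_(n \in [set: int]) F n.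
Proof.
apply/esym/(reindex_fsbigT (fun n => n + c)).
by exists (fun n => n - c) => n /=; rewrite ?addrK ?subrK.
Qed.

Lemma int_ind_up (P : int -> Prop) (lo : int) :
  (forall a, a <= lo -> P a) -> (forall a, P a -> P (a + 1)) -> forall a, P a.
Proof.
move=> Hb Hs a; case: (lerP a lo) => [/Hb //|ha].
have -> : a = lo + (absz (a - lo))%:Z by lia.
elim: (absz (a - lo)) => [|k IH]; first by apply: Hb; lia.
have -> : lo + k.+1%:Z = (lo + k%:Z) + 1 by lia.
exact: Hs.
Qed.

Lemma int_ind_down (P : int -> Prop) (hi : int) :
  (forall a, hi <= a -> P a) -> (forall a, P (a + 1) -> P a) -> forall a, P a.
Proof.
move=> Hb Hs a; case: (lerP hi a) => [/Hb //|ha].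
have -> : a = hi - (absz (hi - a))%:Z by lia.
elim: (absz (hi - a)) => [|k IH]; first by apply: Hb; lia.
apply: Hs; have -> : hi - k.+1%:Z + 1 = hi - k%:Z by lia.
by [].
Qed.
Section PpSec.
Variables (K : fieldType) (S : int -> K).
Definition Pp (b a : int) := \big[*%R/1]_(j \in [set j : int | (b < j)%R && (j < a)%R]) S j.

Lemma Pp_fin b a : finite_set [set j : int | (b < j)%R && (j < a)%R].
Proof. by apply: (@finite_int_bnd _ b a) => j /= /andP[h1 h2]; lia. Qed.

Lemma Pp_S b a : b < a -> Pp b (a + 1) = Pp b a * S a.
Proof.
move=> hba; rewrite /Pp (fsbigD1 a _ _ (Pp_fin b (a+1))); last by rewrite /=; apply/andP; lia.
  rewrite mulrC; congr (_ * _); apply: eq_fsbigl.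
  by apply/seteqP; split => j /=; [move=> [/andP[h1 h2] /eqP h3]; apply/andP; lia | move=> /andP [h1 h2]; split; [apply/andP; lia|apply/eqP; lia]].
Qed.

Lemma Pp_lowS a b : a + 1 < b -> Pp a b = S (a + 1) * Pp (a + 1) b.
Proof.
move=> hab; rewrite /Pp (fsbigD1 (a + 1) _ _ (Pp_fin a b)); last by rewrite /=; apply/andP; lia.
  congr (_ * _); apply: eq_fsbigl.
  by apply/seteqP; split => j /=; [move=> [/andP[h1 h2] /eqP h3]; apply/andP; lia | move=> /andP [h1 h2]; split; [apply/andP; lia|apply/eqP; lia]].
Qed.

Lemma Pp_1 a : Pp a (a + 1) = 1.
Proof. by apply: fsbig1 => j /= /andP [h1 h2]; lia. Qed.

Lemma Pp_0 b a j : b < j < a -> S j = 0 -> Pp b a = 0.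
Proof.
move=> hj hS; rewrite /Pp (fsbigD1 j _ _ (Pp_fin b a)) //; by rewrite /= hS mul0r.
Qed.
End PpSec.

Section Core.
Variables (K : fieldType) (S C : int -> K) (z : K) (M : int).
Hypotheses (hz : z != 0) (hC : forall j, C j ^+ 2 = 1 + S j ^+ 2)
  (hM : forall j, S j != 0 -> -M <= j <= M).

Definition uu (j : int) := 1 + S j * z^-1.
Definition vv (j : int) := 1 - S j * z.
Definition Aa (n : int) := \big[*%R/1]_(j \in [set j : int | (j <= n - 1)%R]) uu j.
Definition Bb (n : int) := \big[*%R/1]_(j \in [set j : int | (n + 1 <= j)%R]) vv j.
Definition ph (n : int) := C n * z ^ n * Aa n * Bb n.
Local Notation Pp := (Pp S).

Lemma S0 j : (j < -M) || (M < j) -> S j = 0.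
Proof. move=> h; apply/eqP; apply: contraLR h => /hM; lia. Qed.


Lemma fin_u : finite_set (uu @^-1` [set~ 1]).
Proof.
apply: (@finite_int_bnd _ (-M) M) => j /= hj.
apply: hM; apply: contra_notN hj => /eqP h; by rewrite /uu h mul0r addr0.
Qed.

Lemma fin_v : finite_set (vv @^-1` [set~ 1]).
Proof.
apply: (@finite_int_bnd _ (-M) M) => j /= hj.
apply: hM; apply: contra_notN hj => /eqP h; by rewrite /vv h mul0r subr0.
Qed.


Lemma zS n : z ^ (n + 1) = z ^ n * z.
Proof. by rewrite exprzDr ?unitfE // expr1z. Qed.

Lemma A_S n : Aa (n + 1) = Aa n * uu n.
Proof.
rewrite /Aa (fsbig_D1 _ (x:=n) fin_u); last by rewrite /=; lia.
rewrite mulrC; congr (_ * _); apply: eq_fsbigl.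
by apply/seteqP; split => j /=; [move=> [h1 /eqP h2]; lia | move=> h; split; [lia|apply/eqP; lia]].
Qed.

Lemma B_S n : Bb n = vv (n + 1) * Bb (n + 1).
Proof.
rewrite /Bb (fsbig_D1 _ (x:=n+1) fin_v); last by rewrite /=; lia.
congr (_ * _); apply: eq_fsbigl.
by apply/seteqP; split => j /=; [move=> [h1 /eqP h2]; lia | move=> h; split; [lia|apply/eqP; lia]].
Qed.

Lemma A_low n : n <= -M -> Aa n = 1.
Proof.
move=> hn; apply: fsbig1 => j /= hj; rewrite /uu S0 ?mul0r ?addr0 //; lia.
Qed.

Lemma B_high n : M <= n -> Bb n = 1.
Proof.
move=> hn; apply: fsbig1 => j /= hj; rewrite /vv S0 ?mul0r ?subr0 //; lia.
Qed.

Definition fL (a b : int) : K := if b < a then - (Pp b a * C b * ph b) else 0.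
Definition ell a := \sum_(b \in [set: int]) fL a b.

Lemma fL_fin a : finite_set ((fL a) @^-1` [set~ 0]).
Proof.
apply: (@finite_int_bnd _ (if a - 1 <= -M - 1 then a - 1 else -M - 1) (a - 1)).
move=> b /= hb; move: hb; rewrite /fL; case: ifP => // hba hb.
have : ~ ((b < a - 1) && (b < -M - 1)).
  move=> /andP[h1 h2]; apply: hb.
  by rewrite (Pp_0 (j:=b + 1)) ?S0 ?mul0r ?oppr0 //; (try apply/andP); lia.
by case: ifP => h1 h2; apply/andP; split; lia.
Qed.

Lemma ell_S a : ell (a + 1) = S a * ell a - C a * ph a.
Proof.
rewrite /ell (fsum_D1 (x:=a) (fL_fin (a+1))) //.
rewrite [in RHS](fsum_D1 (x:=a) (fL_fin a)) //.
have e1 : fL (a + 1) a = - (C a * ph a).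
  by rewrite /fL ifT ?Pp_1 ?mul1r //; lia.
have e2 : fL a a = 0 by rewrite /fL ltxx.
rewrite e1 e2 add0r.
have -> : \sum_(j \in [set: int] `\ a) fL (a + 1) j =
          S a * \sum_(j \in [set: int] `\ a) fL a j.
  rewrite mulr_fsumr; apply: eq_fsbigr => b /set_mem [_ /= hb].
  rewrite /fL; case: (ltrP b a) => h.
    by rewrite ifT ?Pp_S //; [ring | lia].
  by rewrite ifF ?mulr0 //; apply/negbTE; lia.
by rewrite addrC.
Qed.

Lemma ell_low a : a <= -M -> ell a = - (z ^ (a - 1) * Aa a * Bb (a - 1)).
Proof.
move=> ha.
rewrite /ell (fsum_D1 (x:=a - 1) (fL_fin a)) //.
rewrite fsbig1 ?addr0; last first.
  move=> b [_ /= hb]; rewrite /fL; case: ifP => // h.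
  by rewrite (Pp_0 (j:=b + 1)) ?S0 ?mul0r ?oppr0 //; (try apply/andP); lia.
have hP : Pp (a - 1) a = 1 by have := Pp_1 S (a - 1); rewrite subrK.
have hS : S (a - 1) = 0 by apply: S0; lia.
have hCC : C (a - 1) * C (a - 1) = 1 by rewrite -expr2 hC hS expr0n /= addr0.
rewrite /fL ifT; last by lia.
rewrite hP /ph (A_low (n := a - 1)) ?(A_low (n := a)) //; try lia.
by rewrite !mulr1 mul1r !mulrA hCC mul1r.
Qed.

Lemma ell_closed a : ell a = - (z ^ (a - 1) * Aa a * Bb (a - 1)).
Proof.
move: a; apply: (@int_ind_up _ (-M)) => [a ha|a IH]; first exact: ell_low.
rewrite ell_S IH addrK.
have hB := B_S (a - 1); rewrite subrK in hB.
have hz1 := zS (a - 1); rewrite subrK in hz1.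
rewrite hB A_S /ph hz1 /uu /vv.
have hCC := hC a.
apply/eqP; rewrite -subr_eq0.
set t := z ^ (a - 1); set A := Aa a; set B := Bb a; set s := S a; set c := C a.
rewrite (_ : _ - _ = t * A * B * z * (1 + s ^+ 2 - c ^+ 2)); last by field.
by rewrite hCC subrr mulr0.
Qed.
Lemma sgnS (d : int) : (-1) ^ (d + 1) = - ((-1) ^ d) :> K.
Proof. by rewrite exprzDr ?unitrN1 // expr1z mulrN1. Qed.

Definition gR (a b : int) : K :=
  if a < b then (-1) ^ (b - a) * Pp a b * C b * ph b else 0.
Definition rr a := \sum_(b \in [set: int]) gR a b.

Lemma gR_fin a : finite_set ((gR a) @^-1` [set~ 0]).
Proof.
apply: (@finite_int_bnd _ (a + 1) (if a + 1 <= M + 1 then M + 1 else a + 1)).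
move=> b /= hb; move: hb; rewrite /gR; case: ifP => // hba hb.
have : ~ ((a + 1 < b) && (M + 1 < b)).
  move=> /andP[h1 h2]; apply: hb.
  by rewrite (Pp_0 (j:=b - 1)) ?S0 ?mulr0 ?mul0r //; (try apply/andP); lia.
by case: ifP => h1 h2; apply/andP; split; lia.
Qed.

Lemma rr_S a : rr a = - (C (a + 1) * ph (a + 1)) - S (a + 1) * rr (a + 1).
Proof.
rewrite /rr (fsum_D1 (x:=a + 1) (gR_fin a)) //.
rewrite [in RHS](fsum_D1 (x:=a + 1) (gR_fin (a + 1))) //.
have e1 : gR a (a + 1) = - (C (a + 1) * ph (a + 1)).
  rewrite /gR ifT ?Pp_1; last by lia.
  by rewrite (_ : a + 1 - a = 1) ?expr1z; [ring | lia].
have e2 : gR (a + 1) (a + 1) = 0 by rewrite /gR ltxx.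
rewrite e1 e2 add0r.
have -> : \sum_(j \in [set: int] `\ (a + 1)) gR a j =
          - S (a + 1) * \sum_(j \in [set: int] `\ (a + 1)) gR (a + 1) j.
  rewrite mulr_fsumr; apply: eq_fsbigr => b /set_mem [_ /= hb].
  rewrite /gR; case: (ltrP (a + 1) b) => h.
    rewrite ifT ?(@Pp_lowS _ S a) //; try lia.
    rewrite (_ : b - a = (b - (a + 1)) + 1) ?sgnS; [ring | lia].
  by rewrite ifF ?mulr0 //; apply/negbTE; lia.
by rewrite mulNr.
Qed.

Lemma rr_high a : M <= a -> rr a = - (z ^ (a + 1) * Aa (a + 1) * Bb a).
Proof.
move=> ha.
rewrite /rr (fsum_D1 (x:=a + 1) (gR_fin a)) //.
rewrite fsbig1 ?addr0; last first.
  move=> b [_ /= hb]; rewrite /gR; case: ifP => // h.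
  by rewrite (Pp_0 (j:=b - 1)) ?S0 ?mulr0 ?mul0r //; (try apply/andP); lia.
have hS : S (a + 1) = 0 by apply: S0; lia.
have hCC : C (a + 1) * C (a + 1) = 1 by rewrite -expr2 hC hS expr0n /= addr0.
rewrite /gR ifT; last by lia.
rewrite Pp_1 (_ : a + 1 - a = 1); last by lia.
rewrite /ph (B_high (n := a + 1)) ?(B_high (n := a)) //; try lia.
rewrite expr1z !mulr1 mulN1r !mulNr !mulrA hCC mul1r //.
Qed.

Lemma rr_closed a : rr a = - (z ^ (a + 1) * Aa (a + 1) * Bb a).
Proof.
move: a; apply: (@int_ind_down _ M) => [a ha|a IH]; first exact: rr_high.
rewrite rr_S IH.
rewrite (B_S a) (A_S (a + 1)) /ph (zS (a + 1)) /uu /vv.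
have hCC := hC (a + 1).
apply/eqP; rewrite -subr_eq0.
set t := z ^ (a + 1); set A := Aa (a + 1); set B := Bb (a + 1); set s := S (a + 1); set c := C (a + 1).
rewrite (_ : _ - _ = t * A * B * (1 + s ^+ 2 - c ^+ 2)); last by field.
by rewrite hCC subrr mulr0.
Qed.
Definition Hm (a b : int) : K :=
  (if b < a then - (C a * Pp b a * C b) else 0) +
  (if a < b then (-1) ^ (b - a) * C a * Pp a b * C b else 0).

Lemma finsc (f : int -> K) c : finite_set (f @^-1` [set~ 0]) ->
  finite_set ((fun b => c * f b) @^-1` [set~ 0]).
Proof.
move=> h; apply: sub_finite_set h => b /= hb hf; apply: hb; by rewrite hf mulr0.
Qed.

Lemma main_core a :
  \sum_(b \in [set: int]) Hm a b * ph b = - (z + z^-1) * ph a.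
Proof.
rewrite (eq_fsbigr (fun b => C a * fL a b + C a * gR a b)); last first.
  move=> b _; rewrite /Hm /fL /gR.
  case: (ltrP b a) => h1; case: (ltrP a b) => h2; try lia; ring.
rewrite fsumD; [|exact: finsc (fL_fin a)|exact: finsc (gR_fin a)].
rewrite -!mulr_fsumr -/(ell a) -/(rr a) ell_closed rr_closed.
have := zS (a - 1); rewrite subrK => h.
have h1 : z ^ (a - 1) = z ^ a * z^-1 by rewrite h mulfK.
have := B_S (a - 1); rewrite subrK => hB.
rewrite h1 hB A_S zS /ph /uu /vv.
by field.
Qed.

Lemma F2core n :
  (z + S n) * ph n * C (n + 1) = (1 - S (n + 1) * z) * ph (n + 1) * C n.
Proof.
rewrite /ph A_S (B_S n) zS /uu /vv.
by field.
Qed.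
End Core.

Lemma Pp_neg (K : fieldType) (S : int -> K) a b : a < b ->
  Pp (fun j => - S j) a b = (-1) ^ (b - a - 1) * Pp S a b.
Proof.
move=> hab; have -> : b = a + 1 + (absz (b - a - 1)%R)%:Z by lia.
elim: (absz (b - a - 1)%R) => [|k IH].
  by rewrite addr0 !Pp_1 (_ : a + 1 - a - 1 = 0) ?expr0z ?mul1r //; lia.
have -> : a + 1 + k.+1%:Z = (a + 1 + k%:Z) + 1 by lia.
rewrite !Pp_S; try lia.
rewrite IH (_ : a + 1 + k%:Z + 1 - a - 1 = (a + 1 + k%:Z - a - 1) + 1) ?sgnS; [ring|lia].
Qed.

Lemma sgn_sq (K : fieldType) (d : int) : (-1) ^ d * (-1) ^ d = 1 :> K.
Proof.
rewrite -exprzDr ?unitrN1 // (_ : d + d = 2%:Z * d); last by lia.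
rewrite -exprz_exp (_ : (-1) ^ 2%:Z = 1 :> K) ?exp1rz //.
by change ((-1) ^+ 2 = 1 :> K); rewrite expr2 mulN1r opprK.
Qed.

Lemma Hm_neg (K : fieldType) (S C : int -> K) a b :
  Hm S C a b = Hm (fun j => - S j) C b a.
Proof.
rewrite /Hm; case: (ltrP a b) => h1.
  rewrite ifF; last by apply/negbTE; lia.
  rewrite ifF; last by apply/negbTE; lia.
  rewrite Pp_neg //; set d := b - a - 1.
  rewrite (_ : b - a = d + 1) ?sgnS; [ring | rewrite /d; lia].
case: (ltrP b a) => h2.
  rewrite Pp_neg //; set d := a - b - 1.
  rewrite (_ : a - b = d + 1) ?sgnS; last by rewrite /d; lia.
  have := sgn_sq K d; set s := (-1) ^ d => hs.
  rewrite !addr0 !add0r.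
  by rewrite -[LHS]mul1r -hs; ring.
by rewrite !addr0.
Qed.

Section Top.
Variable R : realType.
Local Open Scope complex_scope.

Lemma expiD (x y : R) : expi (x + y) = expi x * expi y.
Proof.
rewrite /expi cosD sinD; apply/eqP; rewrite eq_complex /=.
by apply/andP; split; apply/eqP; ring.
Qed.

Lemma expi0 : expi (0 : R) = 1.
Proof. by rewrite /expi cos0 sin0. Qed.

Lemma expi_neq0 (x : R) : expi x != 0.
Proof.
apply/negP => /eqP h; have := expiD (-x) x; rewrite addNr expi0 h mulr0.
by move/eqP; rewrite oner_eq0.
Qed.

Lemma expiN (x : R) : expi (- x) = (expi x)^-1.
Proof.
have := expiD (-x) x; rewrite addNr expi0 => h.
by rewrite -[LHS]mulr1 -(divff (expi_neq0 x)) mulrA -h mul1r.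
Qed.

Lemma expi_nat (n : nat) (x : R) : expi (n%:R * x) = expi x ^+ n.
Proof.
elim: n => [|n IH]; first by rewrite mul0r expi0 expr0.
by rewrite mulrSr mulrDl mul1r expiD IH exprSr.
Qed.

Lemma expi_int (k : int) (x : R) : expi (k%:~R * x) = expi x ^ k.
Proof.
case: k => n; first exact: expi_nat.
rewrite NegzE mulrNz mulNr expiN.
have -> : (n.+1%:Z)%:~R = n.+1%:R :> R by [].
by rewrite expi_nat -(exprz_inv (expi x) n.+1) -exprVn.
Qed.


Lemma coshsinh (x : R) : coshR x ^+ 2 = 1 + sinhR x ^+ 2.
Proof.
rewrite /coshR /sinhR expRN.
have hx : expR x != 0 by rewrite gt_eqF ?expR_gt0.
by field.
Qed.

Lemma sinhR0 : sinhR (0 : R) = 0.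
Proof. by rewrite /sinhR oppr0 subrr mul0r. Qed.

Lemma coshR0 : coshR (0 : R) = 1.
Proof. by rewrite /coshR oppr0 expR0 (_ : (1 + 1 : R) = 2) ?divff // pnatr_eq0. Qed.

Lemma coshR_neq0 (x : R) : coshR x != 0.
Proof.
rewrite /coshR mulf_neq0 // ?invr_eq0 ?pnatr_eq0 //.
by rewrite gt_eqF // addr_gt0 ?expR_gt0.
Qed.

Variable gamma : int -> R.

Lemma Cg2 n : Cg gamma n ^+ 2 = 1 + Sg gamma n ^+ 2.
Proof. by rewrite /Cg /Sg -!rmorphXn coshsinh rmorphD rmorph1. Qed.

Lemma Cg_neq0 n : Cg gamma n != 0.
Proof.
apply/negP => /eqP h; move: (coshR_neq0 (gamma n)); rewrite /Cg in h.
by case: h => ->; rewrite eqxx.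
Qed.

Lemma Sg_gamma0 n : gamma n = 0 -> Sg gamma n = 0 /\ Cg gamma n = 1.
Proof. by move=> h; rewrite /Sg /Cg h sinhR0 coshR0. Qed.

Lemma gamma_bnd : finite_set [set n : int | gamma n != 0] ->
  exists M : int, forall n, gamma n != 0 -> -M <= n <= M.
Proof.
move=> /finite_fsetP [X hX].
exists (\max_(x <- finmap.enum_fset X) absz x)%:Z => n hn.
have : n \in finmap.enum_fset X.
  have : [set n : int | gamma n != 0] n by [].
  by rewrite hX.
move=> hin.
have h : (absz n <= \max_(x <- finmap.enum_fset X) absz x)%N :=
  @leq_bigmax_seq _ _ xpredT (fun x : int => absz x) n hin isT.
move: h; set m := (\max_(x <- _) _)%N => h.
lia.
Qed.

Lemma phi_eq theta n :
  phi_coef gamma theta n = ph (Sg gamma) (Cg gamma) (expi theta) n.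
Proof. by rewrite /phi_coef /ph /Aa /Bb /uu /vv expi_int expiN. Qed.

Lemma phis_eq theta n :
  phis_coef gamma theta n =
  ph (fun j => - Sg gamma j) (Cg gamma) (expi (- theta)) n.
Proof.
rewrite /phis_coef /ph /Aa /Bb /uu /vv -mulrN expi_int -expiN opprK.
congr (_ * _ * _).
  by apply: eq_fsbigr => j _; rewrite mulNr.
by apply: eq_fsbigr => j _; rewrite mulNr opprK.
Qed.

Lemma calH_eq a b : calH gamma a b = Hm (Sg gamma) (Cg gamma) a b.
Proof.
rewrite /calH /Hm; case: (ltrP a b) => h1.
  rewrite ifF; last by apply/negbTE; lia.
  rewrite -(fsbig_widen [set (b, a)]) ?fsbig_set1.
  - rewrite /hcoef /Hmn /= !eqxx /= (_ : (a == b) = false) ?mulr0 ?addr0 ?mulr1 ?add0r; last by apply/negbTE; lia.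
    by rewrite /Pp; ring.
  - by move=> [m n] /= [-> ->] /=.
  move=> [m n] [/= hmn hne]; rewrite /preimage /= /Hmn.
  rewrite (_ : (a == n) && (b == m) = false); last first.
    by apply/negbTE/negP => /andP [/eqP e1 /eqP e2]; apply: hne; rewrite e1 e2.
  rewrite (_ : (a == m) && (b == n) = false) ?mulr0 ?addr0 ?mulr0 //.
  by apply/negbTE/negP => /andP [/eqP e1 /eqP e2]; subst; lia.
case: (ltrP b a) => h2.
  rewrite -(fsbig_widen [set (a, b)]) ?fsbig_set1.
  - rewrite /hcoef /Hmn /= !eqxx /= (_ : (a == b) = false) ?add0r ?addr0 ?mulr1; last by apply/negbTE; lia.
    set d := a - b.
    rewrite sgnS.
    have := sgn_sq _ d; set s := (-1) ^ d => hs.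
    rewrite /Pp; set P := \big[*%R/1]_(j \in _) _.
    transitivity (- (s * s) * (Cg gamma a * P * Cg gamma b)); first ring.
    by rewrite hs mulN1r.
  - by move=> [m n] /= [-> ->] /=.
  move=> [m n] [/= hmn hne]; rewrite /preimage /= /Hmn.
  rewrite (_ : (a == m) && (b == n) = false); last first.
    by apply/negbTE/negP => /andP [/eqP e1 /eqP e2]; apply: hne; rewrite e1 e2.
  rewrite (_ : (a == n) && (b == m) = false) ?mulr0 ?addr0 ?mulr0 //.
  by apply/negbTE/negP => /andP [/eqP e1 /eqP e2]; subst; lia.
rewrite addr0 fsbig1 // => -[m n] /= hmn; rewrite /Hmn.
rewrite (_ : (a == n) && (b == m) = false); last first.
  by apply/negbTE/negP => /andP [/eqP e1 /eqP e2]; subst; lia.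
rewrite (_ : (a == m) && (b == n) = false) ?mulr0 ?addr0 ?mulr0 //.
by apply/negbTE/negP => /andP [/eqP e1 /eqP e2]; subst; lia.
Qed.

End Top.

Section Main.
Variables (R : realType) (gamma : int -> R) (M : int).
Hypothesis hM : forall n, gamma n != 0 -> -M <= n <= M.

Lemma hSg : forall j, Sg gamma j != 0 -> -M <= j <= M.
Proof.
move=> j hj; apply: hM; apply: contra_neq hj => h; by rewrite (Sg_gamma0 h).1.
Qed.

Lemma hSgN : forall j, - Sg gamma j != 0 -> -M <= j <= M.
Proof. by move=> j; rewrite oppr_eq0; apply: hSg. Qed.

Lemma Cg2N n : Cg gamma n ^+ 2 = 1 + (- Sg gamma n) ^+ 2.
Proof. by rewrite sqrrN Cg2. Qed.

Lemma part1 theta :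
  fcomm (calH gamma) (phi gamma theta)
  = fscale (- (expi theta + expi (- theta))) (phi gamma theta).
Proof.
rewrite /fcomm /fscale /=; congr FLin; apply/funext => a /=.
  rewrite (eq_fsbigr (fun b => Hm (Sg gamma) (Cg gamma) a b *
                               ph (Sg gamma) (Cg gamma) (expi theta) b)); last first.
    by move=> b _; rewrite calH_eq phi_eq.
  by rewrite (main_core (expi_neq0 theta) (@Cg2 _ gamma) hSg) phi_eq expiN.
by rewrite fsbig1 ?oppr0 ?mulr0 // => b _; rewrite mulr0.
Qed.

Lemma part2 theta :
  fcomm (calH gamma) (phis gamma theta)
  = fscale (expi theta + expi (- theta)) (phis gamma theta).
Proof.
rewrite /fcomm /fscale /=; congr FLin; apply/funext => b /=.
  by rewrite fsbig1 ?mulr0 // => a _; rewrite mulr0.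
rewrite (eq_fsbigr (fun a => Hm (fun j => - Sg gamma j) (Cg gamma) b a *
                   ph (fun j => - Sg gamma j) (Cg gamma) (expi (- theta)) a)); last first.
  by move=> a _; rewrite calH_eq Hm_neg phis_eq.
rewrite (main_core (expi_neq0 (- theta)) Cg2N hSgN) phis_eq expiN invrK.
by rewrite mulNr opprK addrC.
Qed.

End Main.

Lemma int_fin_bnd (P : set int) : finite_set P ->
  exists N : nat, forall n, P n -> - N%:Z <= n <= N%:Z.
Proof.
move=> /finite_fsetP [X hX].
exists (\max_(x <- finmap.enum_fset X) absz x) => n hn.
have hin : n \in finmap.enum_fset X by have := hn; rewrite hX.
have h : (absz n <= \max_(x <- finmap.enum_fset X) absz x)%N :=
  @leq_bigmax_seq _ _ xpredT (fun x : int => absz x) n hin isT.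
move: h; set m := (\max_(x <- _) _)%N => h.
lia.
Qed.

Lemma fin_conv (V : zmodType) (F : int -> V) :
  finite_set [set k | F k != 0] -> finite_set (F @^-1` [set~ 0]).
Proof. by apply: sub_finite_set => k /= /eqP. Qed.

Lemma fsumN (V : idomainType) (I : choiceType) (A : set I) (G : I -> V) :
  \sum_(j \in A) - G j = - \sum_(j \in A) G j.
Proof.
by rewrite -mulN1r mulr_fsumr; apply: eq_fsbigr => j _; rewrite mulN1r.
Qed.

Lemma fsumB (V : idomainType) (I : choiceType) (A : set I) (F G : I -> V) :
  finite_set (F @^-1` [set~ 0]) -> finite_set (G @^-1` [set~ 0]) ->
  \sum_(j \in A) (F j - G j) = \sum_(j \in A) F j - \sum_(j \in A) G j.
Proof.
move=> fF fG; rewrite fsumD ?fsumN //.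
by apply: sub_finite_set fG => j /= hj hG; apply: hj; rewrite hG oppr0.
Qed.

Lemma fsum_win (V : nmodType) (F : int -> V) (lo : int) (L : nat) :
  (forall k, ~ (lo <= k < lo + L%:Z) -> F k = 0) ->
  \sum_(k \in [set: int]) F k = \sum_(i < L) F (lo + i%:Z).
Proof.
move=> H.
rewrite -(big_mkord xpredT (fun i => F (lo + i%:Z))).
rewrite -(big_map (fun i : nat => lo + i%:Z) xpredT F).
rewrite [RHS]bigfs.
- by apply: eq_fsbigl; apply/seteqP; split => k.
- rewrite map_inj_uniq ?iota_uniq // => i j /= h; lia.
move=> i _ hi; apply: H => hb; move/negP: hi; apply.
apply/mapP; exists (absz (i - lo)); last by lia.
rewrite mem_index_iota; lia.
Qed.

Section Trig.
Variable R : realType.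

Lemma trig_uniq0 (e : int -> R[i]) (N : nat) :
  (forall k, ~ (- N%:Z <= k <= N%:Z) -> e k = 0) ->
  (forall x : R, \sum_(k \in [set: int]) e k * expi (k%:~R * x) = 0) ->
  forall k, e k = 0.
Proof.
move=> hN hx.
pose L := (2 * N).+1.
pose p := \poly_(i < L) e (- N%:Z + i%:Z).
have hp : forall x : R, p.[expi x] = 0.
  move=> x; rewrite horner_poly.
  have := hx x; rewrite (@fsum_win _ _ (- N%:Z) L); last first.
    by move=> k hk; rewrite hN ?mul0r //; lia.
  move=> h.
  rewrite (_ : \sum_(i < L) _ = expi x ^ N%:Z * \sum_(i < L) e (- N%:Z + i%:Z) * expi ((- N%:Z + i%:Z)%:~R * x)); first by rewrite h mulr0.
  rewrite mulr_sumr; apply: eq_bigr => i _.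
  rewrite expi_int mulrCA -exprzDr ?unitfE ?expi_neq0 //.
  by rewrite (_ : N%:Z + (- N%:Z + i%:Z) = i%:Z) //; lia.
have p0 : p = 0.
  apply/eqP/negP => /negP hp0.
  pose rs := [seq expi (i%:R / L%:R : R) | i <- iota 0 L].
  have hs : (size rs < size p)%N.
    apply: max_poly_roots => //.
      by apply/allP => y /mapP [i _ ->]; rewrite /root hp.
    rewrite map_inj_in_uniq ?iota_uniq // => i j hi hj.
    rewrite /expi => -[hc _].
    have hL : (L%:R : R) != 0 by rewrite pnatr_eq0.
    have hi' : (i < L)%N by move: hi; rewrite mem_iota; lia.
    have hj' : (j < L)%N by move: hj; rewrite mem_iota; lia.
    have bnd k : (k < L)%N -> (k%:R / L%:R : R) \in `[0, pi].
      move=> hk; rewrite in_itv /= divr_ge0 ?ler0n //=.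
      apply: (le_trans _ (pi_ge2 R)); apply: (le_trans _ (ler1n R 2)).
      by rewrite ler_pdivrMr ?ltr0n // mul1r ler_nat ltnW.
    have := cos_inj (bnd _ hi') (bnd _ hj') hc.
    move=> h; have : (i%:R : R) = j%:R by rewrite -(divfK hL (i%:R)) h divfK.
    by move/eqP; rewrite eqr_nat => /eqP.
  have := leq_trans hs (size_poly _ _); rewrite size_map size_iota ltnn.
  by [].
move=> k.
case: (boolP ((- N%:Z <= k) && (k <= N%:Z))) => hk; last first.
  by apply: hN => /andP h; move/negP: hk; apply; apply/andP.
have := congr1 (fun q : {poly R[i]} => q`_(absz (k + N%:Z))) p0.
rewrite coef_poly coef0 /= ifT; last by lia.
by rewrite (_ : - N%:Z + (absz (k + N%:Z))%:Z = k) //; lia.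
Qed.


Lemma trig_uniq (c d : int -> R[i]) f : trig_coeffs c f -> trig_coeffs d f -> c = d.
Proof.
move=> [fc hc] [fd hd].
have [N1 h1] := int_fin_bnd fc; have [N2 h2] := int_fin_bnd fd.
apply/funext => k; apply/eqP; rewrite -subr_eq0; apply/eqP.
move: k; apply: (@trig_uniq0 (fun k => c k - d k) (N1 + N2)).
  move=> k hk.
  have e1 : c k = 0.
    by apply/eqP; case: eqP => // /eqP /h1 hb; exfalso; apply: hk; lia.
  have e2 : d k = 0.
    by apply/eqP; case: eqP => // /eqP /h2 hb; exfalso; apply: hk; lia.
  by rewrite e1 e2 subrr.
move=> x.
rewrite (eq_fsbigr (fun k => c k * expi (k%:~R * x) - d k * expi (k%:~R * x))); last first.
  by move=> k _; rewrite mulrBl.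
rewrite fsumB; first by rewrite -hc -hd subrr.
  by apply: sub_finite_set (fin_conv fc) => k /= hk hc0; apply: hk; rewrite hc0 mul0r.
by apply: sub_finite_set (fin_conv fd) => k /= hk hc0; apply: hk; rewrite hc0 mul0r.
Qed.

Lemma trig_lin (c : int -> R[i]) f (al be : R[i]) :
  trig_coeffs c f ->
  trig_coeffs (fun k => al * c k + be * c (k - 1)) (fun x => (al + be * expi x) * f x).
Proof.
move=> [fc hc]; have [N hN] := int_fin_bnd fc.
have c0 k : ~ (- N%:Z <= k <= N%:Z) -> c k = 0.
  by move=> hk; apply/eqP; case: eqP => // /eqP /hN hb; exfalso; apply: hk; lia.
split.
  apply: (@finite_int_bnd _ (- N%:Z) (N%:Z + 1)) => k /= hk.
  apply/negP => hb; move/negP: hk; apply.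
  by rewrite c0 ?(c0 (k - 1)) ?mulr0 ?addr0 //; lia.
move=> x.
rewrite (eq_fsbigr (fun k => al * (c k * expi (k%:~R * x)) +
                             be * (c (k - 1) * expi (k%:~R * x)))); last first.
  by move=> k _; ring.
rewrite fsumD; last 2 first.
- apply: (@finite_int_bnd _ (- N%:Z) (N%:Z)) => k /= hk.
  by apply/negP => hb; apply: hk; rewrite c0 ?mul0r ?mulr0 //; lia.
- apply: (@finite_int_bnd _ (- N%:Z + 1) (N%:Z + 1)) => k /= hk.
  by apply/negP => hb; apply: hk; rewrite c0 ?mul0r ?mulr0 //; lia.
rewrite -!mulr_fsumr -hc.
rewrite -(@fsum_shift _ _ _ (fun k => c (k - 1) * expi (k%:~R * x)) 1).
rewrite (eq_fsbigr (fun k => expi x * (c k * expi (k%:~R * x)))); last first.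
  by move=> k _; rewrite addrK intrD mulrDl mul1r expiD; ring.
by rewrite -mulr_fsumr -hc; ring.
Qed.

Lemma trig_conv (c d : int -> R[i]) f g :
  trig_coeffs c f -> trig_coeffs d g ->
  trig_coeffs (fun s => \sum_(r \in [set: int]) c r * d (s - r)) (fun x => f x * g x).
Proof.
move=> [fc hc] [fd hd].
have [N1 h1] := int_fin_bnd fc; have [N2 h2] := int_fin_bnd fd.
have c0 k : ~ (- N1%:Z <= k <= N1%:Z) -> c k = 0.
  by move=> hk; apply/eqP; case: eqP => // /eqP /h1 hb; exfalso; apply: hk; lia.
have d0 k : ~ (- N2%:Z <= k <= N2%:Z) -> d k = 0.
  by move=> hk; apply/eqP; case: eqP => // /eqP /h2 hb; exfalso; apply: hk; lia.
have cd0 s r : ~ (- (N1 + N2)%:Z <= s <= (N1 + N2)%:Z) -> c r * d (s - r) = 0.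
  move=> hs; case: (boolP ((- N1%:Z <= r) && (r <= N1%:Z))) => hr.
    by rewrite d0 ?mulr0 //; lia.
  by rewrite c0 ?mul0r // => h; rewrite h in hr.
have conv0 s : ~ (- (N1 + N2)%:Z <= s <= (N1 + N2)%:Z) ->
    \sum_(r \in [set: int]) c r * d (s - r) = 0.
  by move=> hs; apply: fsbig1 => r _; apply: cd0.
split.
  apply: (@finite_int_bnd _ (- (N1 + N2)%:Z) (N1 + N2)%:Z) => s /= hs.
  case: (boolP ((- (N1 + N2)%:Z <= s) && (s <= (N1 + N2)%:Z))) => // hb.
  by exfalso; move/eqP: hs; apply; apply: conv0 => h; rewrite h in hb.
move=> x.
pose W1 := [set r : int | (- N1%:Z <= r <= N1%:Z)].
pose Ws := [set s : int | (- (N1 + N2)%:Z <= s <= (N1 + N2)%:Z)].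
have fW1 : finite_set W1 by apply: (@finite_int_bnd _ (- N1%:Z) N1%:Z).
have fWs : finite_set Ws by apply: (@finite_int_bnd _ (- (N1 + N2)%:Z) (N1 + N2)%:Z).
rewrite (eq_fsbigr (fun s => \sum_(r \in W1) c r * d (s - r) * expi (s%:~R * x))); last first.
  move=> s _; rewrite mulr_fsuml; apply/esym/fsbig_widen => // r [_ /= hr].
  by rewrite c0 ?mul0r.
rewrite -(fsbig_widen Ws) //; last first.
  move=> s [_ /= hs]; apply: fsbig1 => r _.
  by rewrite cd0 ?mul0r.
rewrite exchange_fsbig //.
rewrite (eq_fsbigr (fun r => (c r * expi (r%:~R * x)) * g x)); last first.
  move=> r /set_mem /= hr.
  rewrite hd -(@fsum_shift _ _ _ (fun t => d t * expi (t%:~R * x)) (- r)) mulr_fsumr.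
  rewrite (fsbig_widen Ws [set: int]) //; last first.
    move=> s [_ /= hs]; rewrite d0 ?mulr0 ?mul0r //; move: hr hs; rewrite /W1 /Ws /=; lia.
  apply: eq_fsbigr => s _.
  have -> : s%:~R * x = r%:~R * x + (s - r)%:~R * x.
    by rewrite -mulrDl -intrD addrC subrK.
  by rewrite expiD; ring.
rewrite -mulr_fsuml hc; congr (_ * _).
by apply/esym/fsbig_widen => // r [_ /= hr]; rewrite c0 ?mul0r.
Qed.

End Trig.

Lemma fin_bnd (V : zmodType) (G : int -> V) (lo hi : int) :
  (forall n, G n != 0 -> lo <= n <= hi) -> finite_set (G @^-1` [set~ 0]).
Proof.
move=> h; apply: (@finite_int_bnd _ lo hi) => n /= hn; apply: h; exact/eqP.
Qed.

Lemma band_gen (R : realType) (F : int -> int -> R[i]) (n0 n1 : int) :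
  n0 <= n1 -> (forall n, finite_set [set p | F n p != 0]) ->
  (forall (k : nat) p, F (n0 - k%:Z) p = F n0 (p - k%:Z)) ->
  (forall (k : nat) p, F (n1 + k%:Z) p = F n1 (p + k%:Z)) ->
  exists K : int, forall n p, F n p != 0 -> - K <= n + p <= K.
Proof.
move=> h01 hfin hL hU.
have [Kf hK] : {Kf : int -> nat & forall n p, F n p != 0 -> - (Kf n)%:Z <= p <= (Kf n)%:Z}.
  apply: (@choice _ _ (fun n (N : nat) => forall p, F n p != 0 -> - N%:Z <= p <= N%:Z)) => n.
  have [N hN] := int_fin_bnd (hfin n).
  by exists N => p hp; apply: hN.
pose L := (absz (n1 - n0)).+1.
pose Km := (\max_(i < L) Kf (n0 + (nat_of_ord i)%:Z)%R)%N.
have hKm n : n0 <= n <= n1 -> (Kf n <= Km)%N.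
  move=> hn; have hi : (absz (n - n0) < L)%N by rewrite /L; lia.
  have := @leq_bigmax _ (fun i : 'I_L => Kf (n0 + (nat_of_ord i)%:Z)%R) (Ordinal hi).
  by rewrite /= (_ : n0 + (absz (n - n0))%:Z = n) //; lia.
exists (Km%:Z + (absz n0)%:Z + (absz n1)%:Z) => n p hnp.
case: (ltrP n n0) => hn0.
  have en : n = n0 - (absz (n0 - n))%:Z by lia.
  move: hnp; rewrite en hL => /hK hb.
  have := hKm n0; rewrite lexx h01 => /(_ isT) hk.
  lia.
case: (ltrP n1 n) => hn1.
  have en : n = n1 + (absz (n - n1))%:Z by lia.
  move: hnp; rewrite en hU => /hK hb.
  have := hKm n1; rewrite lexx h01 => /(_ isT) hk.
  lia.
have := hK _ _ hnp => hb.
have := hKm n; rewrite hn0 hn1 => /(_ isT) hk.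
lia.
Qed.

Section Part3.
Variables (R : realType) (gamma : int -> R) (M : int).
Hypotheses (hM0 : 0 <= M) (hM : forall n, gamma n != 0 -> -M <= n <= M).
Variables (ca cb : int -> int -> R[i]) (cP : int -> R[i]).
Hypotheses (hA : forall n, trig_coeffs (ca n) (fun t => phi_coef gamma t n))
  (hB : forall n, trig_coeffs (cb n) (fun t => phis_coef gamma t n))
  (hP : trig_coeffs cP (Pprod gamma)).

Local Notation S := (Sg gamma).
Local Notation C := (Cg gamma).

Lemma out_SC n : (n < -M) || (M < n) -> S n = 0 /\ C n = 1.
Proof.
move=> h; apply: Sg_gamma0; apply/eqP; case: eqP => // /eqP /hM hb.
by exfalso; move: h hb; lia.
Qed.

Lemma R1 n p :
  C (n + 1) * cb n p + (- (C (n + 1) * S n)) * cb n (p - 1) =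
  C n * S (n + 1) * cb (n + 1) p + C n * cb (n + 1) (p - 1).
Proof.
have H1 := trig_lin (C (n + 1)) (- (C (n + 1) * S n)) (hB n).
have H2 := trig_lin (C n * S (n + 1)) (C n) (hB (n + 1)).
have E : (fun x => (C (n + 1) + - (C (n + 1) * S n) * expi x) * phis_coef gamma x n) =
         (fun x => (C n * S (n + 1) + C n * expi x) * phis_coef gamma x (n + 1)).
  apply/funext => x; rewrite !phis_eq.
  have h := F2core (C) (expi_neq0 (- x)) (hSgN hM) n.
  rewrite expiN in h *.
  have hz := expi_neq0 x.
  transitivity (expi x * (((expi x)^-1 + - S n) * ph (fun j => - S j) C (expi x)^-1 n * C (n + 1))).
    by field.
  by rewrite h; field.
rewrite E in H1.
by have := trig_uniq H1 H2 => /(congr1 (fun c => c p)).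
Qed.

Lemma R2 n q :
  C (n + 1) * S n * ca n q + C (n + 1) * ca n (q - 1) =
  C n * ca (n + 1) q + (- (C n * S (n + 1))) * ca (n + 1) (q - 1).
Proof.
have H1 := trig_lin (C (n + 1) * S n) (C (n + 1)) (hA n).
have H2 := trig_lin (C n) (- (C n * S (n + 1))) (hA (n + 1)).
have E : (fun x => (C (n + 1) * S n + C (n + 1) * expi x) * phi_coef gamma x n) =
         (fun x => (C n + - (C n * S (n + 1)) * expi x) * phi_coef gamma x (n + 1)).
  apply/funext => x; rewrite !phi_eq.
  have h := F2core (C) (expi_neq0 x) (hSg hM) n.
  transitivity ((expi x + S n) * ph S C (expi x) n * C (n + 1)); first by ring.
  by rewrite h; ring.
rewrite E in H1.
by have := trig_uniq H1 H2 => /(congr1 (fun c => c q)).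
Qed.


Lemma O1 n p : (n + 1 < -M) || (M < n) -> cb n p = cb (n + 1) (p - 1).
Proof.
move=> h; have := R1 n p.
have [s0 c0] : S n = 0 /\ C n = 1 by apply: out_SC; lia.
have [s1 c1] : S (n + 1) = 0 /\ C (n + 1) = 1 by apply: out_SC; lia.
by rewrite s0 s1 c0 c1 !mul1r oppr0 !mul0r addr0 add0r.
Qed.

Lemma O2 n q : (n + 1 < -M) || (M < n) -> ca n (q - 1) = ca (n + 1) q.
Proof.
move=> h; have := R2 n q.
have [s0 c0] : S n = 0 /\ C n = 1 by apply: out_SC; lia.
have [s1 c1] : S (n + 1) = 0 /\ C (n + 1) = 1 by apply: out_SC; lia.
by rewrite s0 s1 c0 c1 !mul1r oppr0 !mul0r addr0 add0r.
Qed.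

Let n0 := - M - 1.
Let n1 := M + 1.

Lemma XL (k : nat) p : cb (n0 - k%:Z) p = cb n0 (p - k%:Z).
Proof.
elim: k p => [|k IH] p; first by congr (cb _ _); lia.
rewrite O1; last by rewrite /n0; lia.
rewrite (_ : n0 - k.+1%:Z + 1 = n0 - k%:Z); last by lia.
by rewrite IH (_ : p - 1 - k%:Z = p - k.+1%:Z) //; lia.
Qed.

Lemma YL (k : nat) q : ca (n0 - k%:Z) q = ca n0 (q + k%:Z).
Proof.
elim: k q => [|k IH] q; first by congr (ca _ _); lia.
have := O2 (n := n0 - k.+1%:Z) (q + 1); rewrite addrK => ->; last by rewrite /n0; lia.
rewrite (_ : n0 - k.+1%:Z + 1 = n0 - k%:Z); last by lia.
by rewrite IH (_ : q + 1 + k%:Z = q + k.+1%:Z) //; lia.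
Qed.

Lemma XU (k : nat) p : cb (n1 + k%:Z) p = cb n1 (p + k%:Z).
Proof.
elim: k p => [|k IH] p; first by congr (cb _ _); lia.
rewrite (_ : n1 + k.+1%:Z = n1 + k%:Z + 1); last by lia.
have := O1 (n := n1 + k%:Z) (p + 1); rewrite addrK => <-; last by rewrite /n1; lia.
by rewrite IH (_ : p + 1 + k%:Z = p + k.+1%:Z) //; lia.
Qed.

Lemma YU (k : nat) q : ca (n1 + k%:Z) q = ca n1 (q - k%:Z).
Proof.
elim: k q => [|k IH] q; first by congr (ca _ _); lia.
rewrite (_ : n1 + k.+1%:Z = n1 + k%:Z + 1); last by lia.
have := O2 (n := n1 + k%:Z) q => <-; last by rewrite /n1; lia.
by rewrite IH (_ : q - 1 - k%:Z = q - k.+1%:Z) //; lia.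
Qed.

Lemma bandX : exists K : int, forall n p, cb n p != 0 -> - K <= n + p <= K.
Proof.
apply: (@band_gen _ cb n0 n1); first by rewrite /n0 /n1; lia.
- by move=> n; have [] := hB n.
- exact: XL.
- exact: XU.
Qed.

Lemma bandY : exists K : int, forall n q, ca n q != 0 -> - K <= q - n <= K.
Proof.
have [K hK] : exists K : int, forall n p, ca n (- p) != 0 -> - K <= n + p <= K.
  apply: (@band_gen _ (fun n q => ca n (- q)) n0 n1).
- by rewrite /n0 /n1; lia.
- move=> n; have [h _] := hA n.
  apply: (sub_finite_set _ (finite_image (fun q => - q) h)) => q /= hq.
  by exists (- q); rewrite ?opprK.
- by move=> k p /=; rewrite YL opprB addrC.
- by move=> k p /=; rewrite YU opprD.
exists K => n q hq; have := hK n (- q); rewrite opprK => /(_ hq); lia.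
Qed.


Definition Dd p q := \sum_(n \in [set: int]) cb n p * ca n q.

Lemma finD p q : finite_set ((fun n => cb n p * ca n q) @^-1` [set~ 0]).
Proof.
have [K hK] := bandX.
apply: (@fin_bnd _ _ (- K - p) (K - p)) => n hn.
case: (eqVneq (cb n p) 0) => [h|/hK]; last by lia.
by rewrite h mul0r eqxx in hn.
Qed.

Lemma tele p q : Dd (p - 1) q = Dd p (q - 1).
Proof.
have [K hK] := bandX.
pose T n := (cb n (p - 1) + S n * cb n p) * (ca n q - S n * ca n (q - 1)) / C n ^+ 2.
have hT n : cb n (p - 1) * ca n q - cb n p * ca n (q - 1) = T n - T (n + 1).
  have hc := Cg_neq0 gamma n; have hc' := Cg_neq0 gamma (n + 1).
  have eA : cb (n + 1) (p - 1) + S (n + 1) * cb (n + 1) p =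
            C (n + 1) / C n * (cb n p - S n * cb n (p - 1)).
    have e := R1 n p; apply: (mulfI hc).
    transitivity (C n * S (n + 1) * cb (n + 1) p + C n * cb (n + 1) (p - 1)); first by ring.
    by rewrite -e; field.
  have eB : ca (n + 1) q - S (n + 1) * ca (n + 1) (q - 1) =
            C (n + 1) / C n * (S n * ca n q + ca n (q - 1)).
    have e := R2 n q; apply: (mulfI hc).
    transitivity (C n * ca (n + 1) q + - (C n * S (n + 1)) * ca (n + 1) (q - 1)); first by ring.
    by rewrite -e; field.
  rewrite /T /= eA eB.
  have hC := Cg2 gamma n.
  apply/eqP; rewrite -subr_eq0; apply/eqP.
  set x1 := cb n (p - 1); set x0 := cb n p; set y0 := ca n q; set y1 := ca n (q - 1).
  set s := S n in hC *; set c := C n in hc hC *; set c' := C (n + 1) in hc' *.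
  rewrite [LHS](_ : _ = (x1 * y0 - x0 * y1) * (c ^+ 2 - (1 + s ^+ 2)) / c ^+ 2); last by field; apply/andP; split; [exact: (Cg_neq0 gamma n) | exact: (Cg_neq0 gamma (n + 1))].
  by rewrite hC subrr mulr0 mul0r.
have bT n : T n != 0 -> - K - p <= n <= K - p + 1.
  move=> hn; case: (eqVneq (cb n (p - 1)) 0) => h1.
    case: (eqVneq (cb n p) 0) => h2.
      by move: hn; rewrite /T h1 h2 mulr0 addr0 !mul0r eqxx.
    by have := hK _ _ h2; lia.
  by have := hK _ _ h1; lia.
have fT : finite_set (T @^-1` [set~ 0]) by apply: fin_bnd bT.
have fT1 : finite_set ((fun n => T (n + 1)) @^-1` [set~ 0]).
  by apply: (@fin_bnd _ _ (- K - p - 1) (K - p)) => n /bT; lia.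
apply/eqP; rewrite -subr_eq0; apply/eqP.
rewrite /Dd -fsumB; [|exact: finD|exact: finD].
rewrite (eq_fsbigr (fun n => T n - T (n + 1))); last by move=> n _; exact: hT.
by rewrite fsumB // (@fsum_shift _ _ _ T 1) subrr.
Qed.

Lemma shiftD p q (m : nat) : Dd p q = Dd (p + m%:Z) (q - m%:Z).
Proof.
elim: m => [|m IH]; first by congr (Dd _ _); lia.
rewrite IH; have := tele (p + m%:Z + 1) (q - m%:Z); rewrite addrK => ->.
by congr (Dd _ _); lia.
Qed.

Lemma rearr4 (K : comRingType) (a b c d : K) :
  1 * a * 1 * c * (1 * b * 1 * d) = (a * b) * (c * d).
Proof. by ring. Qed.

Lemma Pfun t : phis_coef gamma t n0 * phi_coef gamma t n0 = Pprod gamma t.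
Proof.
rewrite phis_eq phi_eq /ph.
rewrite (A_low (expi_neq0 (- t)) (hSgN hM)); last by rewrite /n0; lia.
rewrite (A_low (expi_neq0 t) (hSg hM)); last by rewrite /n0; lia.
have hn0 : (n0 < -M) || (M < n0) by rewrite /n0; lia.
have [_ c0] := out_SC hn0.
rewrite c0.
have ez : expi (- t) ^ n0 * expi t ^ n0 = 1.
  by rewrite expiN exprz_inv -exprzDr ?unitfE ?expi_neq0 // addNr expr0z.
rewrite rearr4.
rewrite ez mul1r /Bb -fprodM; last 2 first.
- exact: (fin_v (expi (- t)) (hSgN hM)).
- exact: (fin_v (expi t) (hSg hM)).
rewrite (eq_fsbigr (fun j => (1 + S j * expi (- t)) * (1 - S j * expi t))); last first.
  by move=> j _; rewrite /vv mulNr opprK.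
apply: fsbig_widen => // j [_ /= hj].
have hj' : (j < -M) || (M < j) by rewrite /n0 in hj; lia.
have [s0 _] := out_SC hj'.
by rewrite /preimage /= s0 !mul0r addr0 subr0 mulr1.
Qed.

Lemma part3_main p q : Dd p q = cP (p + q).
Proof.
have [K hK] := bandY.
pose m := absz (q - n0 + K + 1).
rewrite (shiftD p q m).
set p' := p + m%:Z; set q' := q - m%:Z.
have hq' : q' <= n0 - K - 1 by rewrite /q' /m; lia.
have e1 : Dd p' q' = \sum_(n \in [set: int]) cb n0 (p' + n - n0) * ca n0 (q' + n0 - n).
  apply: eq_fsbigr => n _.
  case: (lerP n n0) => hn.
    have en : n = n0 - (absz (n0 - n))%:Z by lia.
    rewrite [in LHS]en XL YL.
    by congr (cb _ _ * ca _ _); lia.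
  have z1 : ca n q' = 0.
    by apply/eqP; case: eqP => // /eqP /hK; lia.
  have z2 : ca n0 (q' + n0 - n) = 0.
    by apply/eqP; case: eqP => // /eqP /hK; lia.
  by rewrite z1 z2 !mulr0.
rewrite e1.
rewrite (eq_fsbigr (fun n => (fun r => cb n0 r * ca n0 (p' + q' - r)) (n + (p' - n0)))); last first.
  by move=> n _ /=; congr (cb _ _ * ca _ _); lia.
rewrite (@fsum_shift _ _ _ (fun r => cb n0 r * ca n0 (p' + q' - r)) (p' - n0)).
have hconv := trig_conv (hB n0) (hA n0).
have Efun : (fun x => phis_coef gamma x n0 * phi_coef gamma x n0) = Pprod gamma.
  by apply/funext => x; exact: Pfun.
rewrite Efun in hconv.
have := trig_uniq hconv hP => /(congr1 (fun c => c (p' + q'))) /= ->.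
by congr cP; rewrite /p' /q'; lia.
Qed.

Lemma part3_final p q : \sum_(n \in [set: int]) cb n p * ca n q = cP (p + q).
Proof. exact: part3_main. Qed.

End Part3.

Unset Implicit Arguments.

Theorem propositionF2 (R : realType) (gamma : int -> R) :
  (forall n : int, 0 <= gamma n) ->
  finite_set [set n : int | gamma n != 0] ->
  (forall n : int, sinhR (gamma n) < 1) ->
  (forall theta : R,
     fcomm (calH gamma) (phi gamma theta)
     = fscale (- (expi theta + expi (- theta))) (phi gamma theta)) /\
  (forall theta : R,
     fcomm (calH gamma) (phis gamma theta)
     = fscale (expi theta + expi (- theta)) (phis gamma theta)) /\
  (forall (ca cb : int -> int -> R[i]) (cP : int -> R[i]),
     (forall n : int, trig_coeffs (ca n) (fun theta => cpsi (phi gamma theta) n)) ->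
     (forall n : int, trig_coeffs (cb n) (fun theta => cpsis (phis gamma theta) n)) ->
     trig_coeffs cP (Pprod gamma) ->
     forall p q : int,
       facomm (FLin (fun _ => 0) (fun n => cb n p))
              (FLin (fun n => ca n q) (fun _ => 0))
       = tp_mul_series cP (@delta_series R) p q).
Proof.
move=> _ hfin _.
have [M0 hM0] := gamma_bnd hfin.
pose M := (absz M0)%:Z.
have hM : forall n, gamma n != 0 -> - M <= n <= M by move=> n /hM0; rewrite /M; lia.
have hMp : 0 <= M by rewrite /M.
split; first exact: (part1 hM).
split; first exact: (part2 hM).
move=> ca cb cP hA hB hP p q.
rewrite /facomm /=.
rewrite (eq_fsbigr (fun n => cb n p * ca n q)); last by move=> n _; rewrite mulr0 addr0.
rewrite (part3_final hMp hM hA hB hP).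
rewrite /tp_mul_series (fsum_D1 (x := p + q)) //; last first.
  apply: (@fin_bnd _ _ (p + q) (p + q)) => r hr.
  case: (eqVneq r (p + q)) => [->|hne]; first by rewrite lexx.
  by move: hr; rewrite /delta_series ifF ?mulr0 ?eqxx //; apply/negbTE; lia.
rewrite /delta_series ifT ?mulr1; last by apply/eqP; lia.
rewrite fsbig1 ?addr0 // => r [_ /= hr].
by rewrite ifF ?mulr0 //; apply/negbTE; lia.
Qed.
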